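(* Work in the semifield $\mathbb{R}_{\max,+}$. Let $\bm{r}_1,\ldots,\bm{r}_m\in\mathbb{R}^{n}$ and $w_1,\ldots,w_m\in\mathbb{R}$, let $\bm{p}=w_1\bm{r}_1\oplus\cdots\oplus w_m\bm{r}_m$ and $\bm{q}^{-}=w_1\bm{r}_1^{-}\oplus\cdots\oplus w_m\bm{r}_m^{-}$, and let $\varphi(\bm{x})=\bm{x}^{-}\bm{p}\oplus\bm{q}^{-}\bm{x}$ (which equals $\max_{i}(\rho(\bm{r}_i,\bm{x})+w_i)$ with $\rho$ the Chebyshev distance). Let $A=(a_{ij})\in\mathbb{R}_{\max,+}^{n\times n}$ be an irreducible matrix with $\mathrm{Tr}(A)=\mathbb{1}$, let $S_0=\{\bm{x}\in\mathbb{R}^n\mid A\bm{x}=\bm{x}\}$ (i.e. $\max_{j}(a_{ij}+x_j)=x_i$ for all $i$), and put $$\Delta=\sqrt{(A^{+}(\bm{q}^{-}A^{+})^{-})^{-}\bm{p}}.$$ Then $\min_{\bm{x}\in S_0}\varphi(\bm{x})=\Delta$, and the minimum is attained at $\bm{x}=\Delta A^{+}(\bm{q}^{-}A^{+})^{-}$.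
   Context: $\mathbb{R}_{\max,+}=(\mathbb{R}\cup\{-\infty\},-\infty,0,\max,+)$: $x\oplus y=\max(x,y)$, $x\otimes y=x+y$ (sign omitted), zero $\mathbb{0}=-\infty$, identity $\mathbb{1}=0$, $x^{-1}=-x$, $\sqrt{x}=x/2$. Matrix and vector operations are the usual ones with $\max$ in place of sum and $+$ in place of product. For a nonzero column (or row) vector $\bm{x}=(x_j)$, the pseudo-inverse $\bm{x}^{-}$ is the row (resp. column) vector with entries $-x_j$ if $x_j\ne-\infty$ and $-\infty$ otherwise; $\bm{q}$ is the column vector with $\bm{q}^{-}$ as its pseudo-inverse. $I$ is the identity matrix (0 on diagonal, $-\infty$ elsewhere), $A^0=I$, $A^{k}=A^{k-1}A$. A square matrix is irreducible if it cannot be brought to block-triangular form by simultaneous permutation of rows and columns. $\mathrm{tr}A=\bigoplus_i a_{ii}$ and $\mathrm{Tr}(A)=\bigoplus_{k=1}^{n}\mathrm{tr}A^{k}$. Let $A^{\ast}=I\oplus A\oplus\cdots\oplus A^{n-1}$ and $A^{\times}=AA^{\ast}$. The matrix $A^{+}$ is formed as follows: for each column $\bm{a}^{\times}_i$ of $A^{\times}$, keep it if its diagonal entry $a^{\times}_{ii}$ equals $\mathbb{1}$ and replace it by the zero vector otherwise; then remove the columns (including zero ones) that are linearly dependent on the others (a vector $\bm{y}$ is linearly dependent on $\bm{x}_1,\ldots,\bm{x}_k$ if $\bm{y}=c_1\bm{x}_1\oplus\cdots\oplus c_k\bm{x}_k$ for some scalars $c_i$); the remaining columns form $A^{+}$.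 *)

(* Defs.v *)
(* Max-plus semifield R_{max,+} over an ordered field R,
   represented as [option R] with [None] = -oo (the zero of the semifield). *)
From mathcomp Require Import all_boot all_order all_algebra all_fingroup.
Set Implicit Arguments. Unset Strict Implicit. Unset Printing Implicit Defensive.
Import Order.TTheory GRing.Theory Num.Theory.
Local Open Scope ring_scope.

Section MaxPlus.
Variable R : realFieldType.

Definition mpadd (a b : option R) : option R :=
  match a, b with
  | None, _ => b
  | _, None => a
  | Some x, Some y => Some (Num.max x y)
  end.

Definition mpmul (a b : option R) : option R :=
  match a, b with
  | Some x, Some y => Some (x + y)
  | _, _ => None
  end.

Definition mpneg (a : option R) : option R := option_map (fun x => - x) a.

Definition mpsqrt (a : option R) : option R := option_map (fun x => x / 2) a.

Definition mple (a b : option R) : bool :=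
  match a, b with
  | None, _ => true
  | Some _, None => false
  | Some x, Some y => x <= y
  end.

Definition mpzero {m n : nat} : 'M[option R]_(m, n) := const_mx None.

Definition mpmx_add {m n : nat} (A B : 'M[option R]_(m, n)) : 'M[option R]_(m, n) :=
  \matrix_(i, j) mpadd (A i j) (B i j).

Definition mpmx_mul {m n p : nat} (A : 'M[option R]_(m, n)) (B : 'M[option R]_(n, p))
  : 'M[option R]_(m, p) :=
  \matrix_(i, k) \big[mpadd/None]_(j < n) mpmul (A i j) (B j k).

Definition mpmx_scale {m n : nat} (c : option R) (A : 'M[option R]_(m, n)) : 'M[option R]_(m, n) :=
  \matrix_(i, j) mpmul c (A i j).

Definition mpmx_pinv {m n : nat} (A : 'M[option R]_(m, n)) : 'M[option R]_(n, m) :=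
  \matrix_(i, j) mpneg (A j i).

Definition mp1 (n : nat) : 'M[option R]_n :=
  \matrix_(i, j) if i == j then Some 0 else None.

Fixpoint mpmx_pow {n : nat} (A : 'M[option R]_n) (k : nat) : 'M[option R]_n :=
  match k with
  | 0 => mp1 n
  | k'.+1 => mpmx_mul (mpmx_pow A k') A
  end.

Definition mpstar {n : nat} (A : 'M[option R]_n) : 'M[option R]_n :=
  \big[mpmx_add/mpzero]_(k < n) mpmx_pow A k.

Definition mptimes {n : nat} (A : 'M[option R]_n) : 'M[option R]_n :=
  mpmx_mul A (mpstar A).

Definition mptr {n : nat} (A : 'M[option R]_n) : option R :=
  \big[mpadd/None]_(i < n) A i i.

Definition mpTr {n : nat} (A : 'M[option R]_n) : option R :=
  \big[mpadd/None]_(1 <= k < n.+1) mptr (mpmx_pow A k).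

Definition mp_irreducible {n : nat} (A : 'M[option R]_n) : Prop :=
  ~ exists (s : 'S_n) (k : nat),
      (0 < k < n)%N /\
      forall i j : 'I_n, (k <= i)%N -> (j < k)%N -> A (s i) (s j) = None.

Definition mp_comb {n k : nat} (y : 'cV[option R]_n) (X : 'I_k -> 'cV[option R]_n)
  (P : pred 'I_k) : Prop :=
  exists c : 'I_k -> option R,
    y = \big[mpmx_add/mpzero]_(i < k | P i) mpmx_scale (c i) (X i).

Definition mp_Aplus_pre {n : nat} (A : 'M[option R]_n) : 'M[option R]_n :=
  \matrix_(i, j) if mptimes A j j == Some 0 then mptimes A i j else None.

(* B is (a choice of) A^+: obtained from mp_Aplus_pre A by removing columns
   (including zero ones) linearly dependent on the others, until none is;
   i.e. B consists of a subfamily of the columns of mp_Aplus_pre A (in their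
   original order) spanning all of them, none of which is linearly dependent
   on the other columns of B. *)
Definition is_Aplus {n k : nat} (A : 'M[option R]_n) (B : 'M[option R]_(n, k)) : Prop :=
  exists f : 'I_k -> 'I_n,
    (forall i j : 'I_k, (i < j)%N -> (f i < f j)%N) /\
    (forall j : 'I_k, col j B = col (f j) (mp_Aplus_pre A)) /\
    (forall j : 'I_n, mp_comb (col j (mp_Aplus_pre A)) (fun i => col i B) predT) /\
    (forall j : 'I_k, ~ mp_comb (col j B) (fun i => col i B) (fun i => i != j)).

Definition mplift {n : nat} (x : 'cV[R]_n) : 'cV[option R]_n := map_mx Some x.

Definition mp_p {m n : nat} (r : 'I_m -> 'cV[R]_n) (w : 'I_m -> R) : 'cV[option R]_n :=
  \big[mpmx_add/mpzero]_(i < m) mpmx_scale (Some (w i)) (mplift (r i)).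

Definition mp_qm {m n : nat} (r : 'I_m -> 'cV[R]_n) (w : 'I_m -> R) : 'rV[option R]_n :=
  \big[mpmx_add/mpzero]_(i < m) mpmx_scale (Some (w i)) (mpmx_pinv (mplift (r i))).

Definition mp_phi {m n : nat} (r : 'I_m -> 'cV[R]_n) (w : 'I_m -> R)
  (x : 'cV[option R]_n) : option R :=
  (mpmx_add (mpmx_mul (mpmx_pinv x) (mp_p r w)) (mpmx_mul (mp_qm r w) x)) 0 0.

Definition mp_S0 {n : nat} (A : 'M[option R]_n) (x : 'cV[R]_n) : Prop :=
  mpmx_mul A (mplift x) = mplift x.

Definition mp_v {m n k : nat} (r : 'I_m -> 'cV[R]_n) (w : 'I_m -> R)
  (B : 'M[option R]_(n, k)) : 'cV[option R]_n :=
  mpmx_mul B (mpmx_pinv (mpmx_mul (mp_qm r w) B)).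

Definition mp_Delta {m n k : nat} (r : 'I_m -> 'cV[R]_n) (w : 'I_m -> R)
  (B : 'M[option R]_(n, k)) : option R :=
  mpsqrt ((mpmx_mul (mpmx_pinv (mp_v r w B)) (mp_p r w)) 0 0).

End MaxPlus.

(* Main.v *)
Require Import Defs.
From mathcomp Require Import all_boot all_order all_algebra all_fingroup.
From HB Require Import structures.
From mathcomp Require Import zify lra.
Import Order.TTheory GRing.Theory Num.Theory.
Local Open Scope ring_scope.
Set Implicit Arguments. Unset Strict Implicit. Unset Printing Implicit Defensive.

Section Basic.
Variable R : realFieldType.
Implicit Types a b c : option R.

Lemma mple_refl a : mple a a.
Proof. by case: a => //= x. Qed.

Lemma mple_trans a b c : mple a b -> mple b c -> mple a c.
Proof. by case: a; case: b; case: c => //= x y z; apply: le_trans. Qed.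

Lemma mple_anti a b : mple a b -> mple b a -> a = b.
Proof. by case: a; case: b => //= x y h1 h2; congr Some; apply/le_anti; rewrite h1 h2. Qed.

Lemma mple_total a b : mple a b || mple b a.
Proof. by case: a; case: b => //= x y; apply: le_total. Qed.

Lemma mpaddA : associative (@mpadd R).
Proof. by case=> [x|]; case=> [y|]; case=> [z|] //=; rewrite maxA. Qed.
Lemma mpaddC : commutative (@mpadd R).
Proof. by case=> [x|]; case=> [y|] //=; rewrite maxC. Qed.
Lemma mpadd0l : left_id None (@mpadd R).
Proof. by case. Qed.
Lemma mpadd0r : right_id None (@mpadd R).
Proof. by case. Qed.

Lemma mple_addl a b : mple a (mpadd a b).
Proof. by case: a; case: b => //= x y; rewrite le_max lexx. Qed.
Lemma mple_addr a b : mple b (mpadd a b).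
Proof. by case: a; case: b => //= x y; rewrite le_max lexx orbT. Qed.
Lemma mple_add a b c : mple a c -> mple b c -> mple (mpadd a b) c.
Proof. by case: a; case: b; case: c => //= x y z h1 h2; rewrite ge_max h1 h2. Qed.
Lemma mpadd_cases a b : mpadd a b = a \/ mpadd a b = b.
Proof.
case: a; case: b => /=; try by [left|right].
move=> x y; rewrite /Num.max; case: ifP; by [left|right].
Qed.

Lemma mpmulA : associative (@mpmul R).
Proof. by case=> [x|]; case=> [y|]; case=> [z|] //=; rewrite addrA. Qed.
Lemma mpmulC : commutative (@mpmul R).
Proof. by case=> [x|]; case=> [y|] //=; rewrite addrC. Qed.
Lemma mpmul1l a : mpmul (Some 0) a = a.
Proof. by case: a => //= x; rewrite add0r. Qed.
Lemma mpmul1r a : mpmul a (Some 0) = a.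
Proof. by case: a => //= x; rewrite addr0. Qed.
Lemma mpmul0r a : mpmul a None = None.
Proof. by case: a. Qed.
Lemma mpmul0l a : mpmul None a = None.
Proof. by []. Qed.
Lemma mpmulDr a b c : mpmul a (mpadd b c) = mpadd (mpmul a b) (mpmul a c).
Proof.
case: a; case: b; case: c => //= x y z.
by congr Some; rewrite /Num.max ltrD2l; case: ifP.
Qed.
Lemma mpmulDl a b c : mpmul (mpadd b c) a = mpadd (mpmul b a) (mpmul c a).
Proof. by rewrite mpmulC mpmulDr !(mpmulC a). Qed.

Lemma mple_mul2r a b c : mple a b -> mple (mpmul a c) (mpmul b c).
Proof. by case: a; case: b; case: c => //= x y z h; rewrite lerD2r. Qed.
Lemma mple_mul2l a b c : mple a b -> mple (mpmul c a) (mpmul c b).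
Proof. by rewrite !(mpmulC c); apply: mple_mul2r. Qed.
Lemma mple_mul a b c d : mple a b -> mple c d -> mple (mpmul a c) (mpmul b d).
Proof. move=> h1 h2; apply: mple_trans (mple_mul2r _ h1) (mple_mul2l _ h2). Qed.

Lemma mpmul_eqN a b : mpmul a b != None -> a != None /\ b != None.
Proof. by case: a; case: b. Qed.

Lemma mple_None a : mple a None -> a = None.
Proof. by case: a. Qed.

Lemma le_big (I : eqType) (r : seq I) (P : pred I) (F : I -> option R) i :
  i \in r -> P i -> mple (F i) (\big[@mpadd R/None]_(j <- r | P j) F j).
Proof.
elim: r => // x r IH; rewrite inE big_cons => /orP [/eqP <-|hi] Pi.
  by rewrite Pi; apply: mple_addl.
case: ifP => _; last exact: IH.
exact: mple_trans (IH hi Pi) (mple_addr _ _).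
Qed.

Lemma le_bigT (I : finType) (F : I -> option R) i :
  mple (F i) (\big[@mpadd R/None]_(j : I) F j).
Proof. exact: (@le_big I (index_enum I) xpredT F i (mem_index_enum _) isT). Qed.

Lemma big_le (I : Type) (r : seq I) (P : pred I) (F : I -> option R) c :
  (forall i, P i -> mple (F i) c) -> mple (\big[@mpadd R/None]_(j <- r | P j) F j) c.
Proof. by move=> h; apply: (big_ind (fun x => mple x c)) => // x y; apply: mple_add. Qed.

Lemma big_attain (I : eqType) (r : seq I) (P : pred I) (F : I -> option R) :
  \big[@mpadd R/None]_(j <- r | P j) F j != None ->
  exists i, [/\ i \in r, P i & \big[@mpadd R/None]_(j <- r | P j) F j = F i].
Proof.
elim: r => [|x r IH]; first by rewrite big_nil.
rewrite big_cons; case: ifP => Px; last first.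
  by move=> /IH [i [h1 h2 h3]]; exists i; rewrite inE h1 orbT.
have [e|e] := mpadd_cases (F x) (\big[@mpadd R/None]_(j <- r | P j) F j); rewrite e.
  by move=> _; exists x; rewrite inE eqxx.
by move=> /IH [i [h1 h2 h3]]; exists i; rewrite inE h1 orbT.
Qed.

Lemma big_mono (I : Type) (r : seq I) (P : pred I) (F G : I -> option R) :
  (forall i, P i -> mple (F i) (G i)) ->
  mple (\big[@mpadd R/None]_(j <- r | P j) F j) (\big[@mpadd R/None]_(j <- r | P j) G j).
Proof.
move=> h; elim: r => [|x r IH]; first by rewrite !big_nil.
rewrite !big_cons; case: ifP => // Px; apply: mple_add.
  exact: mple_trans (h x Px) (mple_addl _ _).
exact: mple_trans IH (mple_addr _ _).
Qed.

Lemma big_None (I : Type) (r : seq I) (P : pred I) :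
  \big[@mpadd R/None]_(j <- r | P j) (None : option R) = None.
Proof. by apply: (big_ind (fun x : option R => x = None)) => // x y -> ->. Qed.

Lemma mul_bigr (I : Type) (r : seq I) (P : pred I) (F : I -> option R) c :
  mpmul c (\big[@mpadd R/None]_(j <- r | P j) F j) = \big[@mpadd R/None]_(j <- r | P j) mpmul c (F j).
Proof. apply: (big_morph (mpmul c)) => [x y|]; [exact: mpmulDr|exact: mpmul0r]. Qed.

Lemma mul_bigl (I : Type) (r : seq I) (P : pred I) (F : I -> option R) c :
  mpmul (\big[@mpadd R/None]_(j <- r | P j) F j) c = \big[@mpadd R/None]_(j <- r | P j) mpmul (F j) c.
Proof. by rewrite mpmulC mul_bigr; apply: eq_bigr => i _; rewrite mpmulC. Qed.

Lemma mpneg_mul a b : mpneg (mpmul a b) = mpmul (mpneg a) (mpneg b).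
Proof. by case: a; case: b => //= x y; rewrite opprD. Qed.

End Basic.

HB.instance Definition _ (R : realFieldType) :=
  Monoid.isComLaw.Build (option R) None (@mpadd R) (@mpaddA R) (@mpaddC R) (@mpadd0l R).

Lemma mxbigE (R : realFieldType) m n (I : Type) (r : seq I) (P : pred I)
  (F : I -> 'M[option R]_(m, n)) i j :
  (\big[@mpmx_add R m n/@mpzero R m n]_(l <- r | P l) F l) i j = \big[@mpadd R/None]_(l <- r | P l) F l i j.
Proof.
apply: (big_morph (fun M : 'M[option R]_(m, n) => M i j)) => [x y|]; by rewrite !mxE.
Qed.

Lemma test (R : realFieldType) n (F : 'I_n -> 'I_n -> option R) :
  \big[@mpadd R/None]_(i < n) \big[@mpadd R/None]_(j < n) F i j =
  \big[@mpadd R/None]_(j < n) \big[@mpadd R/None]_(i < n) F i j.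
Proof. exact: exchange_big. Qed.

Section Walks.
Variable R : realFieldType.
Variable n : nat.
Variable A : 'M[option R]_n.

Fixpoint wt (i : 'I_n) (s : seq 'I_n) : option R :=
  match s with [::] => Some 0 | a :: s' => mpmul (A i a) (wt a s') end.

Lemma wt_cat i s1 s2 : wt i (s1 ++ s2) = mpmul (wt i s1) (wt (last i s1) s2).
Proof.
elim: s1 i => [|a s1 IH] i; first by case: (wt i s2) => //= x; rewrite add0r.
by rewrite /= IH mpmulA.
Qed.

Lemma powS l i j : mpmx_pow A l.+1 i j =
  \big[@mpadd R/None]_(a < n) mpmul (mpmx_pow A l i a) (A a j).
Proof. by rewrite /= mxE. Qed.

Lemma pow_wt i s : mple (wt i s) (mpmx_pow A (size s) i (last i s)).
Proof.
elim/last_ind: s => [|s b IH]; first by rewrite /= mxE eqxx /= lexx.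
rewrite -cats1 wt_cat last_cat /= size_cat addn1 powS mpmul1r.
apply: (mple_trans (mple_mul2r _ IH)).
exact: (le_bigT (fun a => mpmul (mpmx_pow A (size s) i a) (A a b)) (last i s)).
Qed.

Lemma wt_pow l i j : mpmx_pow A l i j != None ->
  exists s, [/\ size s = l, last i s = j & wt i s = mpmx_pow A l i j].
Proof.
elim: l j => [|l IH] j.
  rewrite /= mxE; case: (i =P j) => [<-|] // _; by exists [::].
rewrite powS => /[dup] hne /big_attain [a [_ _ e]].
move: hne; rewrite e => /mpmul_eqN [/IH [s [h1 h2 h3]] _].
exists (rcons s j); rewrite size_rcons last_rcons h1; split => //.
by rewrite -cats1 wt_cat h2 h3 /= mpmul1r.
Qed.

Definition X := mptimes A.

Lemma XE i j : X i j = \big[@mpadd R/None]_(a < n)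
   mpmul (A i a) (\big[@mpadd R/None]_(l < n) mpmx_pow A l a j).
Proof. by rewrite /X /mptimes mxE; apply: eq_bigr => a _; rewrite /mpstar mxbigE. Qed.

Lemma X1 i s : (0 < size s <= n)%N -> mple (wt i s) (X i (last i s)).
Proof.
case: s => [|a s] //= hs'.
rewrite XE; apply: mple_trans (le_bigT (fun a0 => mpmul (A i a0) (\big[@mpadd R/None]_(l < n) mpmx_pow A l a0 (last a s))) a).
apply: mple_mul2l.
apply: mple_trans (pow_wt a s) _.
exact: (le_bigT (fun l : 'I_n => mpmx_pow A l a (last a s)) (Ordinal hs')).
Qed.

Lemma X2 i j : X i j != None ->
  exists s, [/\ (0 < size s <= n)%N, last i s = j & wt i s = X i j].
Proof.
rewrite XE => /[dup] hne /big_attain [a [_ _ e]].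
move: hne; rewrite e => /mpmul_eqN [_ /[dup] hne2 /big_attain [l [_ _ e2]]].
move: hne2; rewrite e2 => /wt_pow [s [h1 h2 h3]].
exists (a :: s); split => //=; first by rewrite h1 ltn_ord.
by rewrite h3.
Qed.

End Walks.

Lemma last_take (T : Type) (s : seq T) (i : T) a :
  (a <= size s)%N -> last i (take a s) = nth i (i :: s) a.
Proof.
elim: s i a => [|x s IH] i [|a] //= ha.
rewrite IH //=; case: a ha => //= a ha; exact: set_nth_default.
Qed.

Section W.
Variable R : realFieldType.
Variable n : nat.
Variable A : 'M[option R]_n.
Hypothesis hTr : mpTr A = Some 0.

Lemma T1 j : mple (X A j j) (Some 0).
Proof.
case E : (X A j j) => [x|] //.
have /X2 [s [hs hl hw]] : X A j j != None by rewrite E.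
rewrite -E -hw -hTr.
apply: mple_trans (pow_wt A j s) _; rewrite hl.
apply: mple_trans (le_bigT (fun i => mpmx_pow A (size s) i i) j) _.
rewrite /mpTr; apply: (@le_big R _ _ xpredT (fun k => mptr (mpmx_pow A k)) (size s)) => //.
by rewrite mem_index_iota; case/andP: hs => -> /=; rewrite ltnS.
Qed.

Lemma W s i : (0 < size s)%N -> mple (wt A i s) (X A i (last i s)).
Proof.
have [L] := ubnP (size s); elim: L s i => // L IH s i hL hpos.
case: (leqP (size s) n) => hsn; first by apply: X1; rewrite hpos hsn.
pose u t := nth i (i :: s) t.
pose f (t : 'I_n.+1) := u t.
have : ~~ injectiveb f.
  apply/injectiveP => /leq_card; by rewrite !card_ord ltnn.
case/injectivePn => t1 [t2 hne hf].
have [a [b [hab hbn hu]]] : exists a b, [/\ (a < b)%N, (b <= n)%N & u a = u b].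
  case: (ltngtP t1 t2) => h.
  - by exists t1, t2; split => //; rewrite -ltnS.
  - by exists t2, t1; split => //; rewrite -ltnS.
  - by move: hne; rewrite (val_inj h) eqxx.
have hbs : (b < size s)%N by apply: leq_ltn_trans hsn.
have has : (a <= size s)%N by apply: ltnW; apply: ltn_trans hbs.
have hab' : (a <= b)%N by apply: ltnW.
set s1 := take a s; set c := take (b - a) (drop a s); set s3 := drop b s.
have hs1c : s1 ++ c = take b s by rewrite /s1 /c -takeD subnKC.
have es : s = s1 ++ c ++ s3 by rewrite catA hs1c cat_take_drop.
have l1 : last i s1 = u a by rewrite last_take.
have l2 : last (u a) c = u a.
  by rewrite -{1}l1 -last_cat hs1c last_take ?(ltnW hbs) //; exact: esym hu.
have hc : mple (wt A (u a) c) (Some 0).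
  apply: mple_trans (T1 (u a)); have h := @X1 _ _ A (u a) c; rewrite l2 in h; apply: h.
  rewrite /c size_takel; last by rewrite size_drop leq_sub2r // ltnW.
  rewrite subn_gt0 hab /=; apply: leq_trans (leq_subr _ _) hbn.
have e3 : last i s = last (u a) s3.
  rewrite es catA last_cat hs1c last_take ?(ltnW hbs) //.
  by rewrite -/(u b) -hu.
apply: mple_trans (_ : mple _ (wt A i (s1 ++ s3))) _.
  rewrite es !wt_cat l1 l2; apply: mple_mul2l.
  by apply: mple_trans (mple_mul2r _ hc) _; rewrite mpmul1l mple_refl.
rewrite e3 -l1 -last_cat; apply: IH.
- rewrite size_cat /s1 /s3 size_takel // size_drop.
  move: hL hab hbs; clear; lia.
- rewrite size_cat size_drop; move: hbs; clear; lia.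
Qed.
End W.

Section Eig.
Variable R : realFieldType.
Variable n : nat.
Variable A : 'M[option R]_n.
Hypothesis hTr : mpTr A = Some 0.

Lemma mple_SomeN (x : R) a : mple (Some x) a -> a != None.
Proof. by case: a. Qed.

Lemma AX c i : X A c c = Some 0 ->
  \big[@mpadd R/None]_(a < n) mpmul (A i a) (X A a c) = X A i c.
Proof.
move=> hc; apply: mple_anti.
  apply: big_le => a _.
  case E : (X A a c) => [y|]; last by rewrite mpmul0r.
  have /X2 [s [hs hl hw]] : X A a c != None by rewrite E.
  have := @W R n A hTr (a :: s) i isT; rewrite /= hl hw E; exact.
case E : (X A i c) => [y|] //.
have /X2 [[|b s] [hs hl hw]] : X A i c != None by rewrite E.
  by [].
rewrite -E -hw /=.
apply: mple_trans (le_bigT (fun a => mpmul (A i a) (X A a c)) b); apply: mple_mul2l.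
case: s hs hl {hw} => [|b' s] hs /= hl.
  by rewrite hl hc /= lexx.
have := @W R n A hTr (b' :: s) b isT; rewrite /= hl; exact.
Qed.

Lemma crit_exists : exists c, X A c c = Some 0.
Proof.
have : mpTr A != None by rewrite hTr.
rewrite /mpTr => /[dup] h /big_attain [k [hk _ e]]; move: h; rewrite e.
rewrite /mptr => /[dup] h /big_attain [j [_ _ e2]]; move: h; rewrite e2.
move=> /[dup] h /wt_pow [s [hs hl hw]].
exists j; apply: mple_anti; first exact: T1.
have : mpTr A = Some 0 by [].
rewrite /mpTr e /mptr e2 -hw => hw0.
have := @X1 R n A j s; rewrite hl hw0; apply.
by move: hk; rewrite hs mem_index_iota ltnS.
Qed.

Section S0.
Variable x : 'cV[R]_n.
Hypothesis hS : mp_S0 A x.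

Lemma S0E i : \big[@mpadd R/None]_(a < n) mpmul (A i a) (Some (x a 0)) = Some (x i 0).
Proof.
have := congr1 (fun M : 'M[option R]_(n, 1) => M i 0) hS; rewrite /= !mxE => <-.
by apply: eq_bigr => a _; rewrite mxE.
Qed.

Lemma S0walk s a : mple (mpmul (wt A a s) (Some (x (last a s) 0))) (Some (x a 0)).
Proof.
elim: s a => [|b s IH] a /=; first by rewrite add0r lexx.
rewrite -mpmulA; apply: mple_trans (mple_mul2l _ (IH b)) _.
rewrite -(S0E a); exact: (le_bigT (fun a0 => mpmul (A a a0) (Some (x a0 0))) b).
Qed.

Lemma S0le i c : mple (mpmul (X A i c) (Some (x c 0))) (Some (x i 0)).
Proof.
case E : (X A i c) => [y|] //.
have /X2 [s [hs hl hw]] : X A i c != None by rewrite E.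
by rewrite -E -hw -{1}hl; apply: S0walk.
Qed.

Definition g (a : 'I_n) : 'I_n :=
  odflt a [pick b | mpmul (A a b) (Some (x b 0)) == Some (x a 0)].

Lemma gP a : A a (g a) = Some (x a 0 - x (g a) 0).
Proof.
have : \big[@mpadd R/None]_(b < n) mpmul (A a b) (Some (x b 0)) != None by rewrite S0E.
move=> /big_attain [b [_ _ e]].
rewrite /g; case: pickP => [b' /eqP|/(_ b)]; last by rewrite -e S0E eqxx.
by case: (A a b') => //= y [<-]; rewrite addrK.
Qed.

Fixpoint gw (L : nat) (y : 'I_n) : seq 'I_n :=
  if L is L'.+1 then g y :: gw L' (g y) else [::].

Lemma gw_size L y : size (gw L y) = L.
Proof. by elim: L y => //= L IH y; rewrite IH. Qed.

Lemma gw_last L y : last y (gw L y) = iter L g y.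
Proof. by elim: L y => //= L IH y; rewrite IH -iterSr. Qed.

Lemma gw_wt L y : wt A y (gw L y) = Some (x y 0 - x (iter L g y) 0).
Proof.
elim: L y => [|L IH] y /=; first by rewrite subrr.
rewrite IH gP /= -iterSr; congr Some; rewrite addrA subrK //.
Qed.

Lemma S0char i : exists c, X A c c = Some 0 /\ mpmul (X A i c) (Some (x c 0)) = Some (x i 0).
Proof.
pose f (t : 'I_n.+1) := iter t g i.
have : ~~ injectiveb f.
  apply/injectiveP => /leq_card; by rewrite !card_ord ltnn.
case/injectivePn => t1 [t2 hne hf].
have [a [b [hab hbn hu]]] : exists a b, [/\ (a < b)%N, (b <= n)%N & iter a g i = iter b g i].
  case: (ltngtP t1 t2) => h.
  - by exists t1, t2; split => //; rewrite -ltnS.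
  - by exists t2, t1; split => //; rewrite -ltnS.
  - by move: hne; rewrite (val_inj h) eqxx.
set j := iter a g i.
have hl : last j (gw (b - a) j) = j by rewrite gw_last /j -iterD subnK ?(ltnW hab).
exists j; split.
  apply: mple_anti; first exact: T1.
  have := @X1 R n A j (gw (b - a) j); rewrite gw_wt -gw_last hl subrr; apply.
  rewrite gw_size; move: hab hbn; clear; lia.
apply: mple_anti; first exact: S0le.
have hl2 : last i (gw b i) = j by rewrite gw_last -hu.
have := @X1 R n A i (gw b i); rewrite gw_wt -gw_last hl2 gw_size => h.
have {}h := h ltac:(move: hab hbn; clear; lia).
apply: mple_trans (mple_mul2r (Some (x j 0)) h).
by rewrite /= subrK lexx.
Qed.
End S0.
End Eig.

Lemma mpleN (R : realFieldType) (a b : option R) : mple a b -> a != None -> b != None.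
Proof. by case: a; case: b. Qed.
Lemma mpmulN (R : realFieldType) (a b : option R) : a != None -> b != None -> mpmul a b != None.
Proof. by case: a; case: b. Qed.

Section Irr.
Variable R : realFieldType.
Variable n : nat.
Variable A : 'M[option R]_n.
Hypothesis hTr : mpTr A = Some 0.
Hypothesis hI : mp_irreducible A.

Lemma Irr c : X A c c = Some 0 -> forall i, X A i c != None.
Proof.
move=> hc i.
pose S := [set a | (a == i) || (X A i a != None)].
have clos : forall a b, a \in S -> A a b != None -> b \in S.
  move=> a b; rewrite !inE => /orP [/eqP ->|ha] hab; apply/orP; right.
    have := @W R n A hTr [:: b] i isT; rewrite /= mpmul1r => h.
    exact: mpleN h hab.
  have /X2 [s [hs hl hw]] := ha.
  have := @W R n A hTr (rcons s b) i; rewrite size_rcons last_rcons => /(_ isT).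
  rewrite -cats1 wt_cat hl /= mpmul1r hw => h.
  exact: mpleN h (mpmulN ha hab).
have allS : forall a, a \in S.
  move=> a0; apply: contraT => ha0; exfalso; apply: hI.
  pose ss := enum (~: S) ++ enum S.
  have hsz : size ss = n by rewrite size_cat -!cardE addnC cardsC card_ord.
  have huniq : uniq ss.
    rewrite cat_uniq !enum_uniq /= andbT; apply/hasPn => y.
    by rewrite !mem_enum in_setC negbK.
  have finj : injective (fun t : 'I_n => nth i ss t).
    by move=> t1 t2 /eqP; rewrite nth_uniq ?hsz // => /eqP; apply: val_inj.
  have hC := cardsC S; rewrite card_ord in hC.
  have hS0 : (0 < #|S|)%N by apply/card_gt0P; exists i; rewrite inE eqxx.
  have hC0 : (0 < #|~: S|)%N by apply/card_gt0P; exists a0; rewrite inE.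
  exists (perm finj), #|~: S|; split.
    by rewrite hC0 /=; move: hS0; rewrite -(ltn_add2r #|~: S|) add0n hC.
  move=> t u ht hu; rewrite !permE; apply/eqP; apply: contraT => hne.
  have hu' : nth i ss u \in ~: S.
    rewrite /ss nth_cat -cardE hu -mem_enum; apply: mem_nth; by rewrite -cardE.
  have ht' : nth i ss t \in S.
    rewrite /ss nth_cat -cardE ltnNge ht /= -mem_enum; apply: mem_nth.
    by rewrite -cardE ltn_subLR // addnC hC.
  have := clos _ _ ht' hne; by rewrite inE in hu'; rewrite (negbTE hu').
have := allS c; rewrite inE => /orP [/eqP e|//]; by rewrite -e hc.
Qed.
End Irr.

Lemma someE (R : realFieldType) (a : option R) : a != None -> a = Some (odflt 0 a).
Proof. by case: a. Qed.

Lemma colE (T : Type) p q (M : 'M[T]_(p, q)) j i (z : 'I_1) : col j M i z = M i j.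
Proof. by rewrite mxE. Qed.

Unset Implicit Arguments. Set Strict Implicit.

Theorem theorem6 (R : realFieldType) (m n k : nat)
  (r : 'I_m -> 'cV[R]_n) (w : 'I_m -> R)
  (A : 'M[option R]_n) (Aplus : 'M[option R]_(n, k)) :
  (0 < m)%N ->
  mp_irreducible A ->
  mpTr A = Some 0 ->
  is_Aplus A Aplus ->
  (exists x0 : 'cV[R]_n,
      mp_S0 A x0 /\
      mplift x0 = mpmx_scale (mp_Delta r w Aplus) (mp_v r w Aplus) /\
      mp_phi r w (mplift x0) = mp_Delta r w Aplus) /\
  (forall x : 'cV[R]_n, mp_S0 A x -> mple (mp_Delta r w Aplus) (mp_phi r w (mplift x))).
Proof.
move=> hm hI hTr [f [_ [hfc [hcomb hind]]]].
set B := Aplus.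
have [c0 hc0] := crit_exists hTr.
have PE : forall i j, mp_Aplus_pre A i j = if X A j j == Some 0 then X A i j else None.
  by move=> i j; rewrite mxE.
have hB : forall j, X A (f j) (f j) = Some 0 /\ forall i, B i j = X A i (f j).
  move=> j.
  have Bc : forall i, B i j = mp_Aplus_pre A i (f j).
    move=> i; have := congr1 (fun M : 'M[option R]_(n, 1) => M i 0) (hfc j).
    by rewrite !mxE.
  case E : (X A (f j) (f j) == Some 0).
    by split; [exact/eqP|move=> i; rewrite Bc PE E].
  exfalso; apply: (hind j); exists (fun _ => None).
  apply/matrixP => i i0; rewrite mxbigE !mxE Bc PE E.
  by rewrite (eq_bigr (fun _ => None)) ?big_None // => l _; rewrite !mxE.
have Bfin : forall i j, B i j != None.
  by move=> i j; have [h1 h2] := hB j; rewrite h2; apply: Irr.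
have combE : forall c, X A c c = Some 0 -> exists cc : 'I_k -> option R,
    forall i, X A i c = \big[@mpadd R/None]_(l < k) mpmul (cc l) (B i l).
  move=> c hc; have [cc e] := hcomb c; exists cc => i.
  have := congr1 (fun M : 'M[option R]_(n, 1) => M i 0) e.
  rewrite mxbigE colE PE hc eqxx => ->.
  by apply: eq_bigr => l _; rewrite !mxE.
have hk : (0 < k)%N.
  have [cc e] := combE c0 hc0.
  have : X A c0 c0 != None by rewrite hc0.
  by rewrite e => /big_attain [l _]; apply: leq_ltn_trans (ltn_ord l).
pose l0 : 'I_k := Ordinal hk.
pose q i := mp_qm r w 0 i.
have qE : forall i, q i = \big[@mpadd R/None]_(l < m) Some (w l - r l i 0).
  by move=> i; rewrite /q /mp_qm mxbigE; apply: eq_bigr => l _; rewrite !mxE.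
pose p i := mp_p r w i 0.
have pE : forall i, p i = \big[@mpadd R/None]_(l < m) Some (w l + r l i 0).
  by move=> i; rewrite /p /mp_p mxbigE; apply: eq_bigr => l _; rewrite !mxE.
have qN : forall i, q i != None.
  by move=> i; rewrite qE; apply: (mpleN (le_bigT (fun l : 'I_m => Some (w l - r l i 0)) (Ordinal hm))).
have pN : forall i, p i != None.
  by move=> i; rewrite pE; apply: (mpleN (le_bigT (fun l : 'I_m => Some (w l + r l i 0)) (Ordinal hm))).
pose qq i := odflt 0 (q i).
pose pp i := odflt 0 (p i).
pose bb i j := odflt 0 (B i j).
have qS : forall i, q i = Some (qq i) by move=> i; apply: someE.
have pS : forall i, p i = Some (pp i) by move=> i; apply: someE.
have bS : forall i j, B i j = Some (bb i j) by move=> i j; apply: someE.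
pose Q j := (mpmx_mul (mp_qm r w) B) 0 j.
have QE : forall j, Q j = \big[@mpadd R/None]_(i < n) Some (qq i + bb i j).
  by move=> j; rewrite /Q mxE; apply: eq_bigr => i _; rewrite -/(q i) qS bS.
have QN : forall j, Q j != None.
  by move=> j; rewrite QE; apply: (mpleN (le_bigT (fun i : 'I_n => Some (qq i + bb i j)) c0)).
pose QQ j := odflt 0 (Q j).
have QS : forall j, Q j = Some (QQ j) by move=> j; apply: someE.
pose v i := mp_v r w B i 0.
have vE : forall i, v i = \big[@mpadd R/None]_(l < k) Some (bb i l - QQ l).
  by move=> i; rewrite /v /mp_v mxE; apply: eq_bigr => l _; rewrite [mpmx_pinv _ _ _]mxE -/(Q l) QS bS.
have vN : forall i, v i != None.
  by move=> i; rewrite vE; apply: (mpleN (le_bigT (fun l : 'I_k => Some (bb i l - QQ l)) l0)).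
pose vv i := odflt 0 (v i).
have vS : forall i, v i = Some (vv i) by move=> i; apply: someE.
pose D := (mpmx_mul (mpmx_pinv (mp_v r w B)) (mp_p r w)) 0 0.
have DE : D = \big[@mpadd R/None]_(i < n) Some (- vv i + pp i).
  by rewrite /D mxE; apply: eq_bigr => i _; rewrite [mpmx_pinv _ _ _]mxE -/(v i) -/(p i) vS pS.
have DN : D != None.
  by rewrite DE; apply: (mpleN (le_bigT (fun i : 'I_n => Some (- vv i + pp i)) c0)).
pose dd := odflt 0 D.
have DS : D = Some dd by apply: someE.
have DeltaE : mp_Delta r w B = Some (dd / 2) by rewrite /mp_Delta -/D DS.
have K1 : forall i, qq i + vv i <= 0.
  move=> i; have : mple (v i) (Some (- qq i)).
    rewrite vE; apply: big_le => l _ /=.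
    have : mple (Some (qq i + bb i l)) (Q l).
      by rewrite QE; apply: (le_bigT (fun i0 : 'I_n => Some (qq i0 + bb i0 l)) i).
    rewrite QS /= => h; lra.
  by rewrite vS /= => h; lra.
have [i0 K2] : exists i0, 0 <= qq i0 + vv i0.
  have := QN l0; rewrite QE => /big_attain [i0 [_ _ e]].
  exists i0; have : mple (Some (bb i0 l0 - QQ l0)) (v i0).
    by rewrite vE; apply: (le_bigT (fun l : 'I_k => Some (bb i0 l - QQ l)) l0).
  rewrite vS /=; move: (QS l0); rewrite QE e => -[<-] h; lra.
have F1 : forall x : 'cV[R]_n, (mpmx_mul (mpmx_pinv (mplift x)) (mp_p r w)) 0 0 =
    \big[@mpadd R/None]_(i < n) Some (- x i 0 + pp i).
  by move=> x; rewrite mxE; apply: eq_bigr => i _; rewrite -/(p i) pS !mxE.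
have F2 : forall x : 'cV[R]_n, (mpmx_mul (mp_qm r w) (mplift x)) 0 0 =
    \big[@mpadd R/None]_(i < n) Some (qq i + x i 0).
  by move=> x; rewrite mxE; apply: eq_bigr => i _; rewrite -/(q i) qS !mxE.
have phiE : forall x : 'cV[R]_n, mp_phi r w (mplift x) =
    mpadd (\big[@mpadd R/None]_(i < n) Some (- x i 0 + pp i))
          (\big[@mpadd R/None]_(i < n) Some (qq i + x i 0)).
  by move=> x; rewrite /mp_phi mxE F1 F2.
rewrite DeltaE; split.
  pose x0 := \col_i (dd / 2 + vv i).
  have hx0 : forall a, Some (dd / 2 + vv a) =
      \big[@mpadd R/None]_(l < k) mpmul (Some (dd / 2 - QQ l)) (X A a (f l)).
    move=> a; have -> : Some (dd / 2 + vv a) = mpmul (Some (dd / 2)) (v a) by rewrite vS.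
    rewrite vE mul_bigr; apply: eq_bigr => l _.
    by rewrite -(hB l).2 bS /=; congr Some; lra.
  exists x0; split; [|split].
  - apply/matrixP => i j; rewrite (ord1 j) !mxE.
    under eq_bigr do rewrite !mxE hx0.
    rewrite hx0.
    rewrite (eq_bigr (fun a => \big[@mpadd R/None]_(l < k)
        mpmul (Some (dd / 2 - QQ l)) (mpmul (A i a) (X A a (f l))))); last first.
      move=> a _; rewrite mul_bigr; apply: eq_bigr => l _.
      by rewrite !mpmulA (mpmulC (A i a)).
    rewrite exchange_big; apply: eq_bigr => l _.
    by rewrite -mul_bigr AX // (hB l).1.
  - apply/matrixP => i j; rewrite (ord1 j) [RHS]mxE -/(v i) vS !mxE.
    by rewrite /= addrC.
  rewrite phiE.
  have -> : \big[@mpadd R/None]_(i < n) Some (- x0 i 0 + pp i) = Some (dd / 2).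
    have -> : Some (dd / 2) = mpmul (Some (- (dd / 2))) D by rewrite DS /=; congr Some; lra.
    rewrite DE mul_bigr; apply: eq_bigr => i _; rewrite !mxE /=; congr Some; lra.
  have -> : \big[@mpadd R/None]_(i < n) Some (qq i + x0 i 0) = Some (dd / 2).
    apply: mple_anti.
      by apply: big_le => i _; rewrite !mxE /=; have := K1 i; lra.
    apply: mple_trans (le_bigT (fun i : 'I_n => Some (qq i + x0 i 0)) i0).
    by rewrite !mxE /=; lra.
  by rewrite /= maxxx.
move=> x hS; rewrite phiE.
set mu := \big[@mpadd R/None]_(i < n) Some (qq i + x i 0).
have muN : mu != None by apply: (mpleN (le_bigT (fun i : 'I_n => Some (qq i + x i 0)) c0)).
have muS : mu = Some (odflt 0 mu) by apply: someE.
set mm := odflt 0 mu.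
have C : forall i, x i 0 <= mm + vv i.
  move=> i; have [c [hc e]] := S0char hTr hS i.
  have [cc hcc] := combE c hc.
  have : X A i c != None by move: e; case: (X A i c).
  rewrite hcc => /big_attain [l [_ _ el]].
  rewrite hcc el in e.
  case Ec : (cc l) => [g|]; last by rewrite Ec in e.
  rewrite Ec bS /= in e; case: e => e.
  have hle : forall i', g + bb i' l + x c 0 <= x i' 0.
    move=> i'; have := S0le hS i' c.
    have h2 : mple (mpmul (cc l) (B i' l)) (X A i' c).
      by rewrite hcc; apply: (le_bigT (fun l0 : 'I_k => mpmul (cc l0) (B i' l0)) l).
    move=> h3; have := mple_trans (mple_mul2r (Some (x c 0)) h2) h3.
    by rewrite Ec bS /=.
  have hQ : QQ l <= mm - g - x c 0.
    have : mple (Q l) (Some (mm - g - x c 0)).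
      rewrite QE; apply: big_le => i' _ /=.
      have : mple (Some (qq i' + x i' 0)) mu.
        exact: (le_bigT (fun i : 'I_n => Some (qq i + x i 0)) i').
      rewrite muS /= -/mm => h1; have := hle i'; lra.
    by rewrite QS.
  have hv : bb i l - QQ l <= vv i.
    have : mple (Some (bb i l - QQ l)) (v i).
      by rewrite vE; apply: (le_bigT (fun l0 : 'I_k => Some (bb i l0 - QQ l0)) l).
    by rewrite vS.
  lra.
have hF : mple (Some (dd - mm)) (\big[@mpadd R/None]_(i < n) Some (- x i 0 + pp i)).
  have -> : Some (dd - mm) = mpmul (Some (- mm)) D by rewrite DS /=; congr Some; lra.
  rewrite DE mul_bigr; apply: big_mono => i _ /=; have := C i; lra.
move: hF; rewrite muS; case: (\big[@mpadd R/None]_(i < n) Some (- x i 0 + pp i)) => //= f1 h.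
rewrite le_max; case: (leP (dd / 2) mm) => h2; first by rewrite orbT.
by apply/orP; left; lra.
Qed.
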